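(* Let $E$ be a complex Banach lattice and let $A: E \supseteq D(A) \to E$ be a densely defined, closed, real linear operator. Let $u \in E_+$, let $\varphi \in E'_+$ be strictly positive, and assume $D(A)\subseteq E_u$ and $D(A')\subseteq (E')_\varphi$. Let $\mu_0$ be a real number in $\rho(A)$. (a) $R(\mu_0,A)\succeq -u\otimes\varphi$ if and only if $R(\mu,A)\succeq -u\otimes\varphi$ for all real $\mu\in\rho(A)$. (b) $R(\mu_0,A)\preceq u\otimes\varphi$ if and only if $R(\mu,A)\preceq u\otimes\varphi$ for all real $\mu\in\rho(A)$.
   Context: $E_{\mathbb{R}}$ denotes the real part of $E$. A linear operator $A$ is real if $D(A) = (D(A)\cap E_{\mathbb{R}}) + i(D(A)\cap E_{\mathbb{R}})$ and $A$ maps $D(A)\cap E_{\mathbb{R}}$ into $E_{\mathbb{R}}$. $R(\mu,A) = (\mu - A)^{-1}$. For bounded real operators, $T\succeq S$ (equivalently $S\preceq T$) means $T - cS$ maps $E_+$ into $E_+$ for some $c>0$. $u\otimes\varphi$ is $f\mapsto\langle\varphi,f\rangle u$. $\varphi$ strictly positive: $\langle\varphi,f\rangle>0$ for all $0\ne f\in E_+$. $E_u = \{x : |x|\le cu \text{ for some } c\ge0\}$; $(E')_\varphi = \{x'\in E' : |x'|\le c\varphi \text{ for some } c\ge 0\}$. *)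

(* Defs.v *)
From HB Require Import structures.
From mathcomp Require Import all_boot all_order all_algebra.
From mathcomp Require Import all_classical all_reals all_analysis.
Set Implicit Arguments. Unset Strict Implicit. Unset Printing Implicit Defensive.
Import Order.TTheory GRing.Theory Num.Theory.
Import numFieldNormedType.Exports.
Local Open Scope classical_set_scope.
Local Open Scope ring_scope.

Record banach_lattice (R : realType) (V : completeNormedModType R) : Type :=
  BanachLattice {
  bl_le : V -> V -> Prop;
  bl_sup : V -> V -> V;
  bl_refl : forall x, bl_le x x;
  bl_antisym : forall x y, bl_le x y -> bl_le y x -> x = y;
  bl_trans : forall x y z, bl_le x y -> bl_le y z -> bl_le x z;
  bl_add : forall x y z, bl_le x y -> bl_le (x + z) (y + z);
  bl_scale : forall (a : R) x y, 0 <= a -> bl_le x y -> bl_le (a *: x) (a *: y);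
  bl_sup_l : forall x y, bl_le x (bl_sup x y);
  bl_sup_r : forall x y, bl_le y (bl_sup x y);
  bl_sup_least : forall x y z, bl_le x z -> bl_le y z -> bl_le (bl_sup x y) z;
  bl_norm_mono : forall x y, bl_le (bl_sup x (- x)) (bl_sup y (- y)) ->
                   `|x| <= `|y| }.

Section Complexification.
Variables (R : realType) (V : completeNormedModType R) (L : banach_lattice V).

(* complex scalars are pairs (Re, Im) of reals *)
Definition cmul (a b : R * R) : R * R :=
  (a.1 * b.1 - a.2 * b.2, a.1 * b.2 + a.2 * b.1).

(* The complex Banach lattice E = E_R + i E_R, modelled as V * V
   (x, y) = x + i y.  Its topology is the product topology, which is the
   topology of the complexified lattice norm (the norms are equivalent). *)
Definition cE := (V * V)%type.

Definition cadd (z w : cE) : cE := (z.1 + w.1, z.2 + w.2).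
Definition cscale (a : R * R) (z : cE) : cE :=
  (a.1 *: z.1 - a.2 *: z.2, a.2 *: z.1 + a.1 *: z.2).
Definition csub (z w : cE) : cE := (z.1 - w.1, z.2 - w.2).

Definition E_real : set cE := [set z | z.2 = 0].
Definition E_pos : set cE := [set z | z.2 = 0 /\ bl_le L 0 z.1].

(* |z| <= w for z in E, w in E_R, with the modulus
   |x + i y| = sup_theta (cos theta x + sin theta y) *)
Definition cmod_le (z : cE) (w : V) : Prop :=
  forall theta : R, bl_le L (cos theta *: z.1 + sin theta *: z.2) w.

(* principal ideal E_u (u in E_+ given by its real part u : V) *)
Definition ideal_E (u : V) : set cE :=
  [set x | exists c : R, 0 <= c /\ cmod_le x (c *: u)].

Definition csubspace (D : set cE) : Prop :=
  D (0, 0) /\ (forall z w, D z -> D w -> D (cadd z w)) /\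
  (forall a z, D z -> D (cscale a z)).

Definition clinear_on (D : set cE) (A : cE -> cE) : Prop :=
  (forall z w, D z -> D w -> A (cadd z w) = cadd (A z) (A w)) /\
  (forall a z, D z -> A (cscale a z) = cscale a (A z)).

Definition densely_defined (D : set cE) : Prop := closure D = setT.

Definition closed_op (D : set cE) (A : cE -> cE) : Prop :=
  closed [set p : cE * cE | D p.1 /\ p.2 = A p.1].

Definition real_op (D : set cE) (A : cE -> cE) : Prop :=
  D = [set cadd p (cscale (0, 1) q) | p in D `&` E_real & q in D `&` E_real]
  /\ (forall z, D z -> E_real z -> E_real (A z)).

Definition dual_elt (phi : cE -> R * R) : Prop :=
  continuous phi /\
  (forall z w, phi (cadd z w) = (phi z + phi w)%R) /\
  (forall a z, phi (cscale a z) = cmul a (phi z)).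

Definition dual_pos (phi : cE -> R * R) : Prop :=
  dual_elt phi /\ (forall f, E_pos f -> (phi f).2 = 0 /\ 0 <= (phi f).1).

Definition strictly_pos (phi : cE -> R * R) : Prop :=
  forall f, E_pos f -> f <> (0, 0) -> (phi f).2 = 0 /\ 0 < (phi f).1.

Definition dual_dom (D : set cE) (A : cE -> cE) (x' : cE -> R * R) : Prop :=
  dual_elt x' /\
  exists y', dual_elt y' /\ forall x, D x -> x' (A x) = y' x.

(* (E')_phi : |x'| <= c phi, where for f in E_+
   |x'|(f) = sup { |x'(g)| : |g| <= f } *)
Definition ideal_dual (phi : cE -> R * R) (x' : cE -> R * R) : Prop :=
  dual_elt x' /\
  exists c : R, 0 <= c /\
    forall f : V, bl_le L 0 f -> forall g : cE, cmod_le g f ->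
      (x' g).1 ^+ 2 + (x' g).2 ^+ 2 <= (c * (phi (f, 0)).1) ^+ 2.

Definition is_resolvent (D : set cE) (A : cE -> cE) (mu : R * R)
  (B : cE -> cE) : Prop :=
  continuous B /\ clinear_on setT B /\
  (forall f, D (B f) /\ csub (cscale mu (B f)) (A (B f)) = f) /\
  (forall x, D x -> B (csub (cscale mu x) (A x)) = x).

Definition in_resolvent_set (D : set cE) (A : cE -> cE) (mu : R * R) : Prop :=
  exists B, is_resolvent D A mu B.

Definition op_succeq (T S : cE -> cE) : Prop :=
  exists c : R, 0 < c /\ forall f, E_pos f -> E_pos (csub (T f) (cscale (c, 0) (S f))).

Definition tensor (u : V) (phi : cE -> R * R) : cE -> cE :=
  fun f => cscale (phi f) (u, 0).

Definition neg_op (T : cE -> cE) : cE -> cE := fun f => cscale (-1, 0) (T f).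

End Complexification.

(* Main.v *)
From Pilot Require Import Defs.
From HB Require Import structures.
From mathcomp Require Import all_boot all_order all_algebra.
From mathcomp Require Import all_classical all_reals all_analysis.
From mathcomp Require Import ring lra zify.
Import Order.TTheory GRing.Theory Num.Theory.
Import numFieldNormedType.Exports.
Local Open Scope classical_set_scope.
Local Open Scope ring_scope.
Set Implicit Arguments. Unset Strict Implicit. Unset Printing Implicit Defensive.
Local Notation cscale := Pilot.Defs.cscale.
Local Notation cadd := Pilot.Defs.cadd.
Local Notation cmul := Pilot.Defs.cmul.
Section Lat.
Variables (R : realType) (V : completeNormedModType R) (L : banach_lattice V).
Local Notation le := (bl_le L).
Local Notation sup := (bl_sup L).

Lemma le_addl x y z : le x y -> le (z + x) (z + y).
Proof. by move=> h; rewrite ![z + _]addrC; apply: bl_add. Qed.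

Lemma le_add2 x y z w : le x y -> le z w -> le (x + z) (y + w).
Proof.
move=> h1 h2; apply: (bl_trans (bl_add z h1)); exact: le_addl.
Qed.

Lemma le_subr x y : le x y -> le 0 (y - x).
Proof. by move=> h; have := bl_add (- x) h; rewrite subrr. Qed.

Lemma le_subl x y : le 0 (y - x) -> le x y.
Proof. by move=> h; have := bl_add x h; rewrite add0r subrK. Qed.

Lemma le_opp x y : le x y -> le (- y) (- x).
Proof.
move=> h; have := bl_add (- x - y) h.
by rewrite addrA subrr add0r addrCA subrr addr0.
Qed.

Definition labs (z : V) := sup z (- z).

Lemma labs_ge0 z : le 0 (labs z).
Proof.
have h := le_add2 (bl_sup_l L z (- z)) (bl_sup_r L z (- z)).
rewrite subrr in h.
have := bl_scale (a := 2^-1) (ltW _) h; rewrite scaler0.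
have -> : labs z + labs z = 2%:R *: labs z by rewrite scaler_nat mulr2n.
rewrite scalerA mulVf ?scale1r ?pnatr_eq0 //.
by apply; rewrite invr_gt0 ltr0n.
Qed.

Lemma labsN z : labs (- z) = labs z.
Proof.
rewrite /labs opprK; apply: bl_antisym; apply: bl_sup_least;
  by [apply: bl_sup_r | apply: bl_sup_l].
Qed.

Definition lpos (x : V) := sup x 0.

Lemma lpos_le x y : le (lpos x) (lpos y + labs (x - y)).
Proof.
apply: bl_sup_least.
  have h := le_add2 (bl_sup_l L y 0) (bl_sup_l L (x - y) (- (x - y))).
  by rewrite addrC subrK in h.
have h := le_add2 (bl_sup_r L y 0) (labs_ge0 (x - y)).
by rewrite addr0 in h.
Qed.

Lemma lpos_lip x y : `|lpos x - lpos y| <= `|x - y|.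
Proof.
apply: bl_norm_mono; apply: bl_sup_least.
  have := bl_add (- lpos y) (lpos_le x y).
  by rewrite [lpos y + _]addrC addrK /labs; apply.
have := bl_add (- lpos x) (lpos_le y x).
rewrite [lpos x + _]addrC addrK -labsN opprB /labs => h.
by rewrite opprB.
Qed.

Lemma lpos_cont : continuous lpos.
Proof.
move=> x; apply/cvgrPdist_lt => e e0; near=> y.
apply: (le_lt_trans (lpos_lip x y)).
near: y. apply: cvgr_dist_lt => //.
Unshelve. all: by end_near.
Qed.
End Lat.
Section Lat2.
Variables (R : realType) (V : completeNormedModType R) (L : banach_lattice V).
Local Notation le := (bl_le L).

Lemma closed_le0 (T : topologicalType) (g : T -> V) :
  continuous g -> closed [set t | le (g t) 0].
Proof.
move=> cg.
have -> : [set t | le (g t) 0] = (fun t => lpos L (g t)) @^-1` [set 0].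
  apply/seteqP; split => t /=.
    move=> h; apply: bl_antisym; first exact: bl_sup_least (bl_refl _ _).
    exact: bl_sup_r.
  by move=> <-; exact: bl_sup_l.
have : continuous (fun t => lpos L (g t)).
  by move=> t; apply: continuous_comp; [exact: cg | exact: lpos_cont].
move/continuous_closedP; apply.
apply: accessible_closed_set1; apply: hausdorff_accessible; exact: norm_hausdorff.
Qed.

Lemma closed_le (T : topologicalType) (g : T -> V) (w : V) :
  continuous g -> closed [set t | le (g t) w].
Proof.
move=> cg.
have -> : [set t | le (g t) w] = [set t | le (g t - w) 0].
  apply/seteqP; split => t /= h.
    by have := bl_add (- w) h; rewrite subrr.
  by have := bl_add w h; rewrite add0r subrK.
apply: closed_le0 => t; apply: cvgB; [exact: cg | exact: cvg_cst].
Qed.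

Lemma closed_ge (T : topologicalType) (g : T -> V) (w : V) :
  continuous g -> closed [set t | le w (g t)].
Proof.
move=> cg.
have -> : [set t | le w (g t)] = [set t | le (w - g t) 0].
  apply/seteqP; split => t /= h.
    by have := bl_add (- g t) h; rewrite subrr.
  by have := bl_add (g t) h; rewrite add0r subrK.
apply: closed_le0 => t; apply: cvgB; [exact: cvg_cst | exact: cg].
Qed.
End Lat2.
Section BaireStep.
Variables (R : realType) (V : completeNormedModType R) (L : banach_lattice V).
Local Notation le := (bl_le L).

Lemma le_scale_u (u : V) (a b : R) : le 0 u -> a <= b -> le (a *: u) (b *: u).
Proof.
move=> u0 ab; apply: le_subl.
rewrite -scalerBl; have := bl_scale (a := b - a) (x := 0) (y := u).
by rewrite scaler0; apply; rewrite // subr_ge0.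
Qed.

Lemma baire_order (b : V -> V) (u : V) :
  (forall x y, b (x + y) = b x + b y) ->
  (forall (a : R) x, b (a *: x) = a *: b x) -> continuous b -> le 0 u ->
  (forall x, exists c : R, le (- (c *: u)) (b x) /\ le (b x) (c *: u)) ->
  exists K : R, 0 <= K /\ forall x,
    le (- ((K * `|x|) *: u)) (b x) /\ le (b x) ((K * `|x|) *: u).
Proof.
move=> bD bZ cb u0 bnd.
have b0 : b 0 = 0.
  by have := bZ 0 0; rewrite !scale0r.
pose C (n : nat) := [set x | le (- (n%:R *: u)) (b x) /\ le (b x) (n%:R *: u)].
have Ccl n : closed (C n).
  apply: closedI; [exact: closed_ge | exact: closed_le].
have Call x : exists n, C n x.
  have [c [h1 h2]] := bnd x.
  exists (Num.trunc c).+1; have cn := ltW (truncnS_gt c).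
  split.
    apply: bl_trans h1; apply: le_opp; exact: le_scale_u.
  apply: bl_trans h2 _; exact: le_scale_u.
have [n Cn] : exists n, ~ dense (~` C n).
  apply: contrapT => hall.
  have dall : forall i, open (~` C i) /\ dense (~` C i).
    move=> i; split; first by rewrite openC.
    by apply: contrapT => hi; apply: hall; exists i.
  have := Baire dall.
  have -> : \bigcap_i (~` C i) = set0.
    apply/seteqP; split => x // hx; have [i Ci] := Call x.
    exact: (hx i I Ci).
  move=> /(_ setT) [].
  - by exists 0.
  - exact: openT.
  - by move=> x [].
have [Ob [[x0 /open_nbhs_nbhs /nbhs_ballP [r r0 bxr]] OC]] := denseNE Cn.
have ballC z : ball x0 r z -> C n z.
  move=> /bxr Oz; apply: contrapT => nC.
  by have : (Ob `&` ~` C n) z by []; rewrite OC.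
have small y : `|y| < r -> le (- ((n%:R + n%:R) *: u)) (b y) /\ le (b y) ((n%:R + n%:R) *: u).
  move=> yr.
  have B1 : C n (x0 + y).
    apply: ballC; rewrite -ball_normE /ball_ /= opprD addrA subrr add0r normrN //.
  have B2 : C n x0 by apply: ballC; exact: ballxx.
  have -> : b y = b (x0 + y) + - b x0.
    by rewrite bD addrC addKr.
  case: B1 => h1 h2; case: B2 => h3 h4.
  rewrite scalerDl; split.
    rewrite opprD; apply: le_add2 h1 _; exact: le_opp.
  apply: le_add2 h2 _; rewrite -[_ *: u]opprK; exact: le_opp.
exists (4 * n%:R / r); split.
  by rewrite divr_ge0 // ?mulr_ge0 // ltW.
move=> x; have [->|x0n] := eqVneq x 0.
  by rewrite b0 normr0 mulr0 scale0r oppr0; split; exact: bl_refl.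
have nx : 0 < `|x| by rewrite normr_gt0.
pose t := r / (2 * `|x|).
have t0 : 0 < t by rewrite divr_gt0 // mulr_gt0.
have tx : `|t *: x| < r.
  rewrite normrZ gtr0_norm // /t -mulrA invfM -mulrA mulVf ?mulr1 ?gt_eqF //.
  by rewrite ltr_pdivrMr // ltr_pMr // ltr1n.
have [h1 h2] := small _ tx.
have ex : (4 * n%:R / r * `|x|) = t^-1 * (n%:R + n%:R).
  rewrite /t invf_div; field; by rewrite gt_eqF.
have bx : b x = t^-1 *: b (t *: x) by rewrite bZ scalerA mulVf ?scale1r // gt_eqF.
rewrite ex -scalerA bx; split.
  rewrite -scalerN; apply: bl_scale h1; by rewrite invr_ge0 ltW.
apply: bl_scale h2; by rewrite invr_ge0 ltW.
Qed.
End BaireStep.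
Section HB.
Variables (R : realType) (V : normedModType R).

Definition GQ (G : set (V * R)) :=
 [/\ (forall x a b, G (x, a) -> G (x, b) -> a = b),
     (forall x y a b c, G (x, a) -> G (y, b) -> G (c *: x + y, c * a + b)),
     (forall x a, G (x, a) -> a <= `|x|) & G (0, 0)].

Definition G0 (z : V) := [set p : V * R | exists c : R, p = (c *: z, c * `|z|)].

Lemma GQ_G0 z : GQ (G0 z).
Proof.
split.
- move=> x a b [c [-> ->]] [d [xd ->]].
  have : `|(c - d) *: z| = 0 by rewrite scalerBl xd subrr normr0.
  rewrite normrZ => /eqP; rewrite mulf_eq0 normr_eq0 subr_eq0 => /orP[/eqP->//|/eqP->].
  by rewrite !mulr0.
- move=> x y a b c [d [-> ->]] [e [-> ->]]; exists (c * d + e).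
  by rewrite scalerDl scalerA mulrDl mulrA.
- move=> x a [c [-> ->]]; rewrite normrZ; apply: ler_wpM2r => //; exact: ler_norm.
- by exists 0; rewrite scale0r mul0r.
Qed.

Lemma GQ_chain z (F : set (set (V * R))) :
  (forall X, F X -> GQ (X `|` G0 z)) -> total_on F subset ->
  GQ ((\bigcup_(X in F) X) `|` G0 z).
Proof.
move=> FQ tot.
set U := (\bigcup_(X in F) X) `|` G0 z.
have common p q : U p -> U q -> exists Y, [/\ GQ Y, Y `<=` U, Y p & Y q].
  have sub X : F X -> X `|` G0 z `<=` U.
    move=> FX w [Xw|Gw]; [left; exists X => // | by right].
  case=> [[X FX Xp]|Gp] [[Y FY Yq]|Gq].
  - have [XY|YX] := tot X Y FX FY.
      by exists (Y `|` G0 z); split; [exact: FQ|exact: sub|left; exact: XY|left].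
    by exists (X `|` G0 z); split; [exact: FQ|exact: sub|left|left; exact: YX].
  - by exists (X `|` G0 z); split; [exact: FQ|exact: sub|left|right].
  - by exists (Y `|` G0 z); split; [exact: FQ|exact: sub|right|left].
  - by exists (G0 z); split; [exact: GQ_G0| move=> w; right|by []|by []].
split.
- move=> x a b Ua Ub; have [Y [[f _ _ _] _ Ya Yb]] := common _ _ Ua Ub.
  exact: f Ya Yb.
- move=> x y a b c Ua Ub; have [Y [[_ l _ _] YU Ya Yb]] := common _ _ Ua Ub.
  exact/YU/l.
- move=> x a Ua; have [Y [[_ _ d _] _ Ya _]] := common _ _ Ua Ua.
  exact: d Ya.
- by right; case: (GQ_G0 z).
Qed.
End HB.
Section HB2.
Variables (R : realType) (V : normedModType R).

Definition Mext (M : set (V * R)) (x1 : V) (t : R) :=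
  [set p | exists y a c, M (y, a) /\ p = (y + c *: x1, a + c * t)].

Lemma GQ_scale (M : set (V * R)) y a (c : R) : GQ M -> M (y, a) -> M (c *: y, c * a).
Proof.
case=> _ l _ m0 Mya; have := l _ _ _ _ c Mya m0; by rewrite addr0 addr0.
Qed.

Lemma GQ_add (M : set (V * R)) y a y' b : GQ M -> M (y, a) -> M (y', b) -> M (y + y', a + b).
Proof.
case=> _ l _ _ h1 h2; have := l _ _ _ _ 1 h1 h2; by rewrite scale1r mul1r.
Qed.

Lemma GQ_ext (M : set (V * R)) x1 : GQ M -> ~ (exists a, M (x1, a)) -> exists t, GQ (Mext M x1 t).
Proof.
move=> MQ nx1; have [Mf Ml Md M0] := MQ.
pose Lo := [set l | exists y a, M (y, a) /\ l = a - `|y - x1|].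
have ub y' a' : M (y', a') -> ubound Lo (`|y' + x1| - a').
  move=> My' _ [y [a [My ->]]].
  rewrite lerBrDr addrAC lerBlDr.
  apply: (le_trans (Md _ _ (GQ_add MQ My My'))).
  have -> : y + y' = (y - x1) + (y' + x1) by rewrite addrACA addNr addr0.
  rewrite addrC; exact: ler_normD.
have Lo0 : Lo !=set0 by exists (0 - `|0 - x1|); exists 0, 0.
have hs : has_sup Lo by split => //; exists (`|0 + x1| - 0); exact: ub.
exists (sup Lo).
have T1 y a : M (y, a) -> a - `|y - x1| <= sup Lo.
  by move=> My; apply: sup_upper_bound => //; exists y, a.
have T2 y a : M (y, a) -> sup Lo <= `|y + x1| - a.
  by move=> My; apply: ge_sup => //; exact: ub.
set t := sup Lo.
split.
- move=> x a b [y [a0 [c [My [-> ->]]]]] [y' [a0' [c' [My' []]]]] e ->.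
  have [cc|cc] := eqVneq c c'.
    rewrite -cc in e; move/addIr: e => yy; rewrite -yy in My'.
    by rewrite (Mf _ _ _ My My') cc.
  exfalso; apply: nx1.
  have Ms := GQ_scale ((c' - c)^-1) MQ (GQ_add MQ My (GQ_scale (-1) MQ My')).
  exists ((c' - c)^-1 * (a0 + -1 * a0')); move: Ms.
  have -> : y + -1 *: y' = (c' - c) *: x1.
    rewrite scaleN1r; apply/eqP; rewrite subr_eq; apply/eqP.
    apply: (addIr (c *: x1)); rewrite e scalerBl.
    by rewrite addrAC subrK addrC.
  by rewrite scalerA mulVf ?scale1r // subr_eq0 eq_sym.
- move=> x y a b k [y1 [a1 [c1 [M1 [-> ->]]]]] [y2 [a2 [c2 [M2 [-> ->]]]]].
  exists (k *: y1 + y2), (k * a1 + a2), (k * c1 + c2); split; first exact: Ml.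
  congr (_, _).
    by rewrite scalerDr scalerA scalerDl addrACA.
  by rewrite mulrDr mulrA mulrDl addrACA.
- move=> x a [y [a0 [c [My [-> ->]]]]].
  have [c0|cn0] := eqVneq c 0.
    by rewrite c0 scale0r addr0 mul0r addr0; exact: Md My.
  case: (ltgtP c 0) => [cneg|cpos|]; last by move/eqP; rewrite (negbTE cn0).
    have d0 : 0 < - c by rewrite oppr_gt0.
    have := T1 _ _ (GQ_scale ((- c)^-1) MQ My).
    have -> : (- c)^-1 *: y - x1 = (- c)^-1 *: (y + c *: x1).
      rewrite scalerDr scalerA.
      have -> : (- c)^-1 * c = -1 by rewrite invrN mulNr mulVf.
      by rewrite scaleN1r.
    rewrite normrZ gtr0_norm ?invr_gt0 // -mulrBr => h.
    have := ler_wpM2l (ltW d0) h; rewrite mulrA mulfV ?oppr_eq0 // mul1r => h2.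
    rewrite /t; lra.
  have := T2 _ _ (GQ_scale (c^-1) MQ My).
  have -> : c^-1 *: y + x1 = c^-1 *: (y + c *: x1).
    by rewrite scalerDr scalerA mulVf ?scale1r // gt_eqF.
  rewrite normrZ gtr0_norm ?invr_gt0 // -mulrBr => h.
  have := ler_wpM2l (ltW cpos) h; rewrite mulrA mulfV ?gt_eqF // mul1r => h2.
  rewrite /t; lra.
- by exists 0, 0, 0; split => //; rewrite scale0r addr0 mul0r addr0.
Qed.
End HB2.
Section HB3.
Variables (R : realType) (V : normedModType R).

Lemma hahn_banach_norm (z : V) : exists psi : V -> R,
  [/\ (forall x y, psi (x + y) = psi x + psi y),
      (forall (c : R) x, psi (c *: x) = c * psi x),
      (forall x, `|psi x| <= `|x|) & psi z = `|z|].
Proof.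
have [A [PA Amax]] := @Zorn_bigcup (V * R) (fun G => GQ (G `|` G0 z))
  (fun F FP tot => GQ_chain FP tot).
set M := A `|` G0 z.
have MQ : GQ M := PA.
have tot x : exists a, M (x, a).
  apply: contrapT => nx.
  have [t Bt] := GQ_ext MQ nx.
  set B := Mext M x t.
  have MB : M `<=` B.
    by case=> y a My; exists y, a, 0; rewrite scale0r addr0 mul0r addr0.
  apply: (Amax B).
    split; first by move=> p Ap; apply: MB; left.
    move=> BA; apply: nx; exists t; left; apply: BA.
    by exists 0, 0, 1; split; [case: MQ|rewrite add0r scale1r add0r mul1r].
  have -> : B `|` G0 z = B.
    by apply/seteqP; split => p; [case=> // Gp; apply: MB; right | left].
  exact: Bt.
have [psi hpsi] := choice tot.
have [Mf Ml Md M0] := MQ.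
have padd x y : psi (x + y) = psi x + psi y.
  apply: (Mf (x + y)); first exact: hpsi.
  by have := Ml _ _ _ _ 1 (hpsi x) (hpsi y); rewrite scale1r mul1r.
have pscale (c : R) x : psi (c *: x) = c * psi x.
  apply: (Mf (c *: x)); first exact: hpsi.
  by have := Ml _ _ _ _ c (hpsi x) M0; rewrite !addr0.
exists psi; split => //.
- move=> x; rewrite ler_norml; apply/andP; split; last exact: Md (hpsi x).
  rewrite lerNl; have := Md _ _ (hpsi (-1 *: x)).
  by rewrite pscale scaleN1r normrN mulN1r.
- apply: (Mf z); first exact: hpsi.
  by right; exists 1; rewrite scale1r mul1r.
Qed.
End HB3.
Section UB.
Variables (R : realType) (V : normedModType R).

Definition ee (n : nat) : R := (3%:R^-1) ^+ n.

Lemma ee_gt0 n : 0 < ee n.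
Proof. by rewrite /ee exprn_gt0 // invr_gt0 ltr0n. Qed.

Lemma eeS n : ee n.+1 = ee n / 3%:R.
Proof. by rewrite /ee exprSr. Qed.

Lemma ee_small n : n.+1%:R * ee n <= 1.
Proof.
elim: n => [|n IH]; first by rewrite /ee expr0 mulr1.
rewrite eeS; apply: le_trans IH.
have h := ee_gt0 n.
have h2 : (n.+2%:R : R) <= 3%:R * n.+1%:R by rewrite -natrM ler_nat; lia.
have -> : n.+2%:R * (ee n / 3%:R) = (n.+2%:R / 3%:R) * ee n by rewrite mulrCA mulrC.
apply: ler_wpM2r; first exact: ltW.
by rewrite ler_pdivrMr ?ltr0n // mulrC.
Qed.

Variables (s : nat -> V) (ps : nat -> V -> R).

Fixpoint Pf (n : nat) : V -> R :=
  match n with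
  | 0 => fun _ => 0
  | m.+1 => fun x => Pf m x + (if 0 <= Pf m (s m) then ee m else - ee m) * ps m x
  end.

Hypothesis psb : forall n x, `|ps n x| <= `|x|.
Hypothesis psD : forall n x y, ps n (x + y) = ps n x + ps n y.
Hypothesis psZ : forall n (c : R) x, ps n (c *: x) = c * ps n x.

Lemma PfD n x y : Pf n (x + y) = Pf n x + Pf n y.
Proof.
elim: n => [|n IH] /=; first by rewrite addr0.
by rewrite IH psD mulrDr addrACA.
Qed.

Lemma PfZ n (c : R) x : Pf n (c *: x) = c * Pf n x.
Proof.
elim: n => [|n IH] /=; first by rewrite mulr0.
by rewrite IH psZ mulrDr mulrCA.
Qed.

Lemma Pf_diff n k x : `|Pf (n + k) x - Pf n x| <= 3%:R / 2%:R * (ee n - ee (n + k)) * `|x|.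
Proof.
elim: k => [|k IH]; first by rewrite addn0 subrr normr0 subrr mulr0 mul0r.
rewrite addnS /=.
set c := (if _ then _ else _).
have hc : `|c * ps (n + k) x| <= ee (n + k) * `|x|.
  rewrite normrM; have -> : `|c| = ee (n + k).
    by rewrite /c; case: ifP => _; rewrite ?normrN gtr0_norm // ee_gt0.
  by apply: ler_wpM2l; [exact: ltW (ee_gt0 _) | exact: psb].
have := ler_normD (Pf (n + k) x - Pf n x) (c * ps (n + k) x).
rewrite addrAC => h; apply: (le_trans h).
rewrite eeS.
have -> : 3%:R / 2%:R * (ee n - ee (n + k) / 3%:R) * `|x| =
  3%:R / 2%:R * (ee n - ee (n + k)) * `|x| + ee (n + k) * `|x|.
  by rewrite !mulrBr !mulrBl; field.
exact: lerD IH hc.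
Qed.

Lemma Pf_bound m n x : Pf m x - 3%:R / 2%:R * ee m * `|x| <= Pf n x + 3%:R / 2%:R * ee n * `|x|.
Proof.
have hx := normr_ge0 x; have hm := ee_gt0 m; have hn := ee_gt0 n.
have am : 0 <= 3%:R / 2%:R * ee m * `|x| by rewrite !mulr_ge0 // ltW.
have an : 0 <= 3%:R / 2%:R * ee n * `|x| by rewrite !mulr_ge0 // ltW.
have [mn|nm] := leqP m n.
  have := Pf_diff m (n - m) x; rewrite subnKC // mulrBr mulrBl.
  move: am an; set a := 3%:R / 2%:R * ee m * `|x|; set b := 3%:R / 2%:R * ee n * `|x|.
  move=> am an; rewrite ler_norml => /andP[h1 h2].
  rewrite -subr_ge0; rewrite -subr_ge0 in h1.
  have -> : Pf n x + b - (Pf m x - a) = (Pf n x - Pf m x - - (a - b)) + b + b.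
    by ring.
  exact: (addr_ge0 (addr_ge0 h1 an) an).
have := Pf_diff n (m - n) x; rewrite subnKC; last exact: ltnW.
rewrite mulrBr mulrBl.
move: am an; set a := 3%:R / 2%:R * ee m * `|x|; set b := 3%:R / 2%:R * ee n * `|x|.
move=> am an; rewrite ler_norml => /andP[h1 h2].
rewrite -subr_ge0; rewrite -subr_ge0 in h2.
have -> : Pf n x + b - (Pf m x - a) = (b - a - (Pf m x - Pf n x)) + a + a.
  by ring.
exact: (addr_ge0 (addr_ge0 h2 am) am).
Qed.

Lemma Pf_limit x : exists r, forall n, `|r - Pf n x| <= 3%:R / 2%:R * ee n * `|x|.
Proof.
pose Lo := [set l | exists m, l = Pf m x - 3%:R / 2%:R * ee m * `|x|].
have Lo0 : Lo !=set0 by exists (Pf 0 x - 3%:R / 2%:R * ee 0 * `|x|), 0%N.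
have ub n : ubound Lo (Pf n x + 3%:R / 2%:R * ee n * `|x|).
  by move=> _ [m ->]; exact: Pf_bound.
have hs : has_sup Lo by split => //; exists (Pf 0 x + 3%:R / 2%:R * ee 0 * `|x|); exact: ub.
exists (sup Lo) => n; rewrite ler_norml; apply/andP; split.
  have : Pf n x - 3%:R / 2%:R * ee n * `|x| <= sup Lo.
    by apply: sup_upper_bound => //; exists n.
  set c := 3%:R / 2%:R * ee n * `|x|.
  rewrite -subr_ge0 => H; rewrite -subr_ge0.
  by have -> : sup Lo - Pf n x - - c = sup Lo - (Pf n x - c) by ring.
have : sup Lo <= Pf n x + 3%:R / 2%:R * ee n * `|x| by apply: ge_sup.
set c := 3%:R / 2%:R * ee n * `|x|.
rewrite -subr_ge0 => H; rewrite -subr_ge0.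
by have -> : c - (sup Lo - Pf n x) = Pf n x + c - sup Lo by ring.
Qed.
Lemma Pf_blow k : ps k (s k) = `|s k| -> ee k * `|s k| <= `|Pf k.+1 (s k)|.
Proof.
move=> h; rewrite [Pf k.+1 _]/= h.
have e0 : 0 <= ee k * `|s k| by rewrite mulr_ge0 // ltW // ee_gt0.
move: e0; set b := ee k * `|s k|; move: (Pf k (s k)) => p e0.
case: ifP => [p0|/negbT]; first by rewrite ger0_norm ?addr_ge0 // lerDr.
rewrite -ltNge mulNr => p0; rewrite ltr0_norm; last by rewrite subr_lt0 (lt_le_trans p0).
by rewrite opprB -subr_ge0 addrAC subrr add0r oppr_ge0 ltW.
Qed.
End UB.
Section UB2.
Variables (R : realType) (V : normedModType R).

Lemma ee_zero (d C : R) : (forall n, `|d| <= ee R n * C) -> d = 0.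
Proof.
move=> h; apply/eqP; apply: contraT => dn.
have d0 : 0 < `|d| by rewrite normr_gt0.
have C0 : 0 <= C.
  have := h 0%N; rewrite /ee expr0 mul1r => hC; exact: le_trans (ltW d0) hC.
pose n := Num.trunc (C / `|d|).
have hn : C / `|d| < n.+1%:R := truncnS_gt _.
have h1 : C < n.+1%:R * `|d| by rewrite -ltr_pdivrMr.
have h2 : n.+1%:R * `|d| <= n.+1%:R * ee R n * C.
  by rewrite -mulrA; apply: ler_wpM2l => //; exact: h.
have h3 : n.+1%:R * ee R n * C <= C.
  have := ee_small R n => hs.
  by rewrite -[X in _ <= X]mul1r; apply: ler_wpM2r.
have := lt_le_trans h1 (le_trans h2 h3); by rewrite ltxx.
Qed.

Lemma weak_bounded (S : set V) :
  (forall psi : V -> R, (forall x y, psi (x + y) = psi x + psi y) ->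
     (forall (c : R) x, psi (c *: x) = c * psi x) ->
     (forall x, `|psi x| <= 2 * `|x|) -> exists M, forall s, S s -> `|psi s| <= M) ->
  exists K, forall s, S s -> `|s| <= K.
Proof.
move=> hyp; apply: contrapT => nb.
have hs (n : nat) : exists s, S s /\ 2 * n%:R / ee R n < `|s|.
  apply: contrapT => hn; apply: nb; exists (2 * n%:R / ee R n) => s Ss.
  rewrite leNgt; apply/negP => lt; apply: hn; by exists s.
have [s sP] := choice hs.
have hb (n : nat) := hahn_banach_norm (s n).
have [ps psP] := choice hb.
have psD n x y : ps n (x + y) = ps n x + ps n y by case: (psP n).
have psZ n (c : R) x : ps n (c *: x) = c * ps n x by case: (psP n).
have psb n x : `|ps n x| <= `|x| by case: (psP n).
have pss n : ps n (s n) = `|s n| by case: (psP n).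
have [psi psiP] := choice (Pf_limit s psb).
have psiD x y : psi (x + y) = psi x + psi y.
  apply/eqP; rewrite -subr_eq0; apply/eqP.
  apply: (@ee_zero _ (3%:R / 2%:R * (`|x + y| + `|x| + `|y|))) => n.
  have e1 := psiP (x + y) n; have e2 := psiP x n; have e3 := psiP y n.
  rewrite PfD // in e1.
  have -> : psi (x + y) - (psi x + psi y) =
    (psi (x + y) - (Pf s ps n x + Pf s ps n y)) - (psi x - Pf s ps n x) - (psi y - Pf s ps n y).
    by ring.
  apply: (le_trans (ler_normB _ _)).
  apply: (le_trans (lerD (ler_normB _ _) (lexx _))).
  have -> : ee R n * (3%:R / 2%:R * (`|x + y| + `|x| + `|y|)) =
     3%:R / 2%:R * ee R n * `|x + y| + 3%:R / 2%:R * ee R n * `|x| + 3%:R / 2%:R * ee R n * `|y|.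
    by ring.
  by apply: lerD; [apply: lerD|].
have psiZ (c : R) x : psi (c *: x) = c * psi x.
  apply/eqP; rewrite -subr_eq0; apply/eqP.
  apply: (@ee_zero _ (3%:R / 2%:R * (`|c *: x| + `|c| * `|x|))) => n.
  have e1 := psiP (c *: x) n; have e2 := psiP x n.
  rewrite PfZ // in e1.
  have -> : psi (c *: x) - c * psi x =
    (psi (c *: x) - c * Pf s ps n x) - c * (psi x - Pf s ps n x) by ring.
  apply: (le_trans (ler_normB _ _)); rewrite normrM.
  have -> : ee R n * (3%:R / 2%:R * (`|c *: x| + `|c| * `|x|)) =
     3%:R / 2%:R * ee R n * `|c *: x| + `|c| * (3%:R / 2%:R * ee R n * `|x|) by ring.
  by apply: lerD => //; apply: ler_wpM2l.
have psib x : `|psi x| <= 2 * `|x|.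
  have := psiP x 0%N; rewrite /= subr0 /ee expr0 mulr1 => h.
  apply: (le_trans h); apply: ler_wpM2r => //.
  by rewrite ler_pdivrMr ?ltr0n // -natrM ler_nat.
have [M hM] := hyp psi psiD psiZ psib.
pose n := Num.trunc M.
have Mn : M < n.+1%:R := truncnS_gt _.
have [Ssn sn] := sP n.+1.
have := hM _ Ssn.
set m := n.+1.
have en := ee_gt0 R m.
have hP := Pf_blow (pss m).
have hQ := psiP (s m) m.+1.
rewrite eeS in hQ.
move=> hpsi.
have : 2 * n.+1%:R / ee R m * ee R m < `|s m| * ee R m by rewrite ltr_pM2r.
rewrite divfK ?gt_eqF // => h1.
have h2 : ee R m * `|s m| <= `|psi (s m)| + `|psi (s m) - Pf s ps m.+1 (s m)|.
  apply: (le_trans hP).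
  have e : Pf s ps m.+1 (s m) = psi (s m) - (psi (s m) - Pf s ps m.+1 (s m)) by ring.
  rewrite {1}e; exact: ler_normB.
move: h1 h2 hQ hpsi Mn; rewrite [`|s m| * _]mulrC.
set a := ee R m * `|s m|; set P := `|psi (s m) - _|.
move: (`|psi (s m)|) => q.
have -> : 3%:R / 2%:R * (ee R m / 3%:R) * `|s m| = a / 2%:R.
  by rewrite /a; field.
move: (n.+1%:R : R) => N; lra.
Qed.
End UB2.
Section Main.
Variables (R : realType) (V : completeNormedModType R) (L : banach_lattice V).
Local Notation le := (bl_le L).
Local Notation E := (cE V).

Lemma cscale_r (a : R) (x y : V) : cscale (a, 0) (x, y) = (a *: x, a *: y).
Proof. by rewrite /cscale /= !scale0r subr0 add0r. Qed.

Lemma cont_re (B : E -> E) : continuous B -> continuous (fun x : V => (B (x, 0)).1).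
Proof.
move=> cB x.
have h1 : {for x, continuous (fun y : V => (y, (0:V)))}.
  by apply: cvg_pair; [exact: cvg_id| exact: cvg_cst].
have h2 := continuous_comp h1 (cB (x, 0)).
apply: (continuous_comp h2); exact: cvg_fst.
Qed.

Lemma cscale0 (z : E) : cscale (0, 0) z = (0, 0).
Proof. by case: z => x y; rewrite /cscale /= !scale0r subrr addr0. Qed.

Lemma res0 (D : set E) (A : E -> E) (mu : R) (B : E -> E) : is_resolvent D A (mu, 0) B -> B (0, 0) = (0, 0).
Proof.
case=> _ [[_ BZ] _].
by have := BZ (0, 0) (0, 0) I; rewrite !cscale0.
Qed.

Lemma res_real (D : set E) (A : E -> E) (mu : R) (B : E -> E) : csubspace D -> clinear_on D A -> real_op D A ->
  is_resolvent D A (mu, 0) B -> forall x, (B (x, 0)).2 = 0.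
Proof.
move=> [_ [_ DZ]] [AD AZ] [Deq Areal] hres x.
have B00 := res0 hres.
case: hres => _ [_ [Bf Bx]].
case: (Bf (x, 0)) => Dw ew.
move: Dw; rewrite {1}Deq => -[p [Dp Rp] [q [Dq Rq] wpq]].
have Dq' : D (cscale (0, 1) q) by apply: DZ.
have Aw := AD _ _ Dp Dq'; rewrite wpq AZ // in Aw.
have Ap : (A p).2 = 0 := Areal _ Dp Rp.
have Aq : (A q).2 = 0 := Areal _ Dq Rq.
rewrite /E_real /= in Rp Rq.
set w := B (x, 0) in ew wpq Aw *.
have w2 : w.2 = q.1.
  rewrite -wpq /cadd /cscale /= Rp Rq.
  by rewrite ?scale0r ?scale1r ?scaler0 ?add0r ?addr0.
have e2 : mu *: w.2 - (A q).1 = 0.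
  have := congr1 snd ew; rewrite /csub Aw /cadd /cscale /= Ap Aq.
  by rewrite ?scale0r ?scale1r ?scaler0 ?add0r ?addr0.
have := Bx _ Dq.
have -> : csub (cscale (mu, 0) q) (A q) = (0, 0).
  rewrite /csub /cscale /= Rq Aq -w2 scale0r subr0 e2.
  by rewrite ?scale0r ?scale1r ?scaler0 ?add0r ?addr0 ?subr0 ?oppr0.
by rewrite B00 w2 => <-.
Qed.

Ltac simpc := rewrite ?scale0r ?scale1r ?scaler0 ?add0r ?addr0 ?subr0 ?oppr0.

Lemma csubE (u v : E) : csub u v = cadd u (cscale (-1, 0) v).
Proof. by case: u => u1 u2; case: v => v1 v2; rewrite /csub /cadd /cscale /=; simpc; rewrite !scaleN1r. Qed.

Lemma lin_csub (B : E -> E) : clinear_on setT B -> forall u v, B (csub u v) = csub (B u) (B v).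
Proof. by case=> BD BZ u v; rewrite !csubE BD // BZ. Qed.

Lemma res_ident (D : set E) (A : E -> E) (mu mu0 : R) (B B0 : E -> E) :
  is_resolvent D A (mu, 0) B -> is_resolvent D A (mu0, 0) B0 ->
  forall f, B f = cadd (B0 f) (cscale (mu0 - mu, 0) (B (B0 f))).
Proof.
move=> [_ [[BD BZ] [_ Bx]]] [_ [_ [B0f _]]] f.
have [Dy ey] := B0f f.
set y := B0 f in Dy ey *.
have key : y = cadd (cscale (mu - mu0, 0) (B y)) (B f).
  rewrite -BZ // -BD // -{1}(Bx _ Dy); congr B.
  rewrite -ey; clear Dy ey; case: y => y1 y2; case: (A (y1, y2)) => a1 a2.
  rewrite /csub /cadd /cscale /=; simpc; congr (_, _); rewrite scalerBl addrA subrK //.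
clear Dy ey; clearbody y; move: key; move: (B y) (B f) => By Bf.
case: By => c1 c2; case: Bf => d1 d2; case: y => y1 y2.
rewrite /cadd !cscale_r /= => -[-> ->].
have -> : mu0 - mu = - (mu - mu0) by rewrite opprB.
by rewrite !scaleNr; congr (_, _); rewrite addrAC subrr add0r.
Qed.

Lemma pairD (a b c d : R) : ((a, b) + (c, d) : R * R) = (a + c, b + d).
Proof. by []. Qed.

Lemma lin_cont (psi : V -> R) (C : R) :
  (forall x y, psi (x + y) = psi x + psi y) -> (forall (c : R) x, psi (c *: x) = c * psi x) ->
  (forall x, `|psi x| <= C * `|x|) -> continuous psi.
Proof.
move=> pD pZ pb x.
have pB y : psi x - psi y = psi (x - y).
  by rewrite pD; have := pZ (-1) y; rewrite scaleN1r mulN1r => ->.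
have C1 : 0 < `|C| + 1 by rewrite ltr_wpDl.
apply/cvgrPdist_lt => e e0; near=> y.
rewrite pB; apply: (le_lt_trans (pb _)).
apply: (le_lt_trans (y := (`|C| + 1) * `|x - y|)).
  by apply: ler_wpM2r => //; apply: (le_trans (ler_norm C)); rewrite lerDl.
rewrite mulrC -ltr_pdivlMr //.
near: y; apply: cvgr_dist_lt => //.
by rewrite divr_gt0.
Unshelve. all: by end_near.
Qed.

Lemma dual_comp (psi : V -> R) (C : R) (T : E -> E) :
  (forall x y, psi (x + y) = psi x + psi y) -> (forall (c : R) x, psi (c *: x) = c * psi x) ->
  (forall x, `|psi x| <= C * `|x|) -> continuous T ->
  (forall z w, T (cadd z w) = cadd (T z) (T w)) ->
  (forall a z, T (cscale a z) = cscale a (T z)) ->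
  dual_elt (fun z => (psi (T z).1, psi (T z).2)).
Proof.
move=> pD pZ pb cT TD TZ.
have pc := lin_cont pD pZ pb.
have pB x y : psi (x - y) = psi x - psi y.
  by rewrite pD; have := pZ (-1) y; rewrite scaleN1r mulN1r => ->.
have c1 : continuous (fun z => psi (T z).1).
  move=> z; apply: (@continuous_comp _ _ _ T (fun t => psi t.1) _ (cT z)).
  apply: (@continuous_comp _ _ _ fst psi); [exact: cvg_fst|exact: pc].
have c2 : continuous (fun z => psi (T z).2).
  move=> z; apply: (@continuous_comp _ _ _ T (fun t => psi t.2) _ (cT z)).
  apply: (@continuous_comp _ _ _ snd psi); [exact: cvg_snd|exact: pc].
split.
  move=> z; exact: (cvg_pair (c1 z) (c2 z)).
split.
  by move=> z w; rewrite TD /cadd /= !pD.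
move=> a z; rewrite TZ /cscale /cmul /= pB pD !pZ.
by congr (_, _); rewrite addrC.
Qed.

Lemma dual_comb (f g : E -> R * R) (k : R) : dual_elt f -> dual_elt g ->
  dual_elt (fun z => (k * (f z).1 - (g z).1, k * (f z).2 - (g z).2)).
Proof.
move=> [cf [fD fZ]] [cg [gD gZ]].
have f1 : continuous (fun z => (f z).1).
  move=> z; apply: (@continuous_comp _ _ _ f fst _ (cf z)); exact: cvg_fst.
have f2 : continuous (fun z => (f z).2).
  move=> z; apply: (@continuous_comp _ _ _ f snd _ (cf z)); exact: cvg_snd.
have g1 : continuous (fun z => (g z).1).
  move=> z; apply: (@continuous_comp _ _ _ g fst _ (cg z)); exact: cvg_fst.
have g2 : continuous (fun z => (g z).2).
  move=> z; apply: (@continuous_comp _ _ _ g snd _ (cg z)); exact: cvg_snd.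
have h1 : continuous (fun z => k * (f z).1 - (g z).1).
  by move=> z; apply: cvgB; [apply: cvgM; [exact: cvg_cst|exact: f1]|exact: g1].
have h2 : continuous (fun z => k * (f z).2 - (g z).2).
  by move=> z; apply: cvgB; [apply: cvgM; [exact: cvg_cst|exact: f2]|exact: g2].
split; first by move=> z; exact: (cvg_pair (h1 z) (h2 z)).
split.
  move=> z w; rewrite fD gD.
  case: (f z) (f w) (g z) (g w) => [a1 a2] [b1 b2] [c1 c2] [d1 d2].
  rewrite !pairD /=; congr (_, _); ring.
move=> a z; rewrite fZ gZ /cmul /=.
case: (f z) (g z) => [a1 a2] [c1 c2] /=; congr (_, _); ring.
Qed.

Lemma cmod_real (x : V) : le 0 x -> cmod_le L (x, 0) x.
Proof.
move=> x0 th /=; rewrite scaler0 addr0.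
have := le_scale_u x0 (cos_le1 th); by rewrite scale1r.
Qed.

Lemma csub_solve (P Q z : E) : csub P Q = z -> Q = csub P z.
Proof.
case: P => p1 p2; case: Q => q1 q2; case: z => z1 z2; rewrite /csub /= => -[<- <-].
by congr (_, _); rewrite opprB addrC subrK.
Qed.

Lemma sq_bound (a b d : R) : 0 <= d -> a ^+ 2 + b ^+ 2 <= d ^+ 2 -> `|a| <= d.
Proof.
move=> d0 h.
have h2 : `|a| ^+ 2 <= d ^+ 2.
  rewrite real_normK ?num_real //; apply: le_trans h; rewrite lerDl; exact: sqr_ge0.
by rewrite -ler_sqr ?nnegrE // normr_ge0.
Qed.

Lemma dual_K2 (D : set E) (A : E -> E) (mu0 : R) (B0 : E -> E) (phi : E -> R * R) :
  clinear_on D A -> is_resolvent D A (mu0, 0) B0 ->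
  dual_pos L phi -> strictly_pos L phi ->
  (forall x', dual_dom D A x' -> ideal_dual L phi x') ->
  exists K2 : R, 0 <= K2 /\ forall x, le 0 x -> `|(B0 (x, 0)).1| <= K2 * (phi (x, 0)).1.
Proof.
move=> hA hres [dphi phipos] sphi hyp.
have B00 := res0 hres.
have [cB [[BD BZ] [Bf Bx]]] := hres.
have B0A z : D z -> B0 (A z) = csub (cscale (mu0, 0) (B0 z)) z.
  move=> Dz; apply: csub_solve; rewrite -BZ // -lin_csub //; exact: Bx.
pose S := [set y | exists x, [/\ le 0 x, x != 0 & y = ((phi (x, 0)).1)^-1 *: (B0 (x, 0)).1]].
have [K hK] : exists K, forall s, S s -> `|s| <= K.
  apply: weak_bounded => psi pD pZ pb.
  have pB x y : psi (x - y) = psi x - psi y.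
    by rewrite pD; have := pZ (-1) y; rewrite scaleN1r mulN1r => ->.
  pose xp (z : E) := (psi z.1, psi z.2).
  pose x2 := fun z => xp (B0 z).
  have dx2 : dual_elt x2.
    apply: (dual_comp pD pZ pb cB) => [z w|a z]; [exact: BD|exact: BZ].
  have dxp : dual_elt xp.
    by apply: (dual_comp (T := id) pD pZ pb) => // z; exact: cvg_id.
  have dd : dual_dom D A x2.
    split => //; exists (fun z => (mu0 * (x2 z).1 - (xp z).1, mu0 * (x2 z).2 - (xp z).2)).
    split; first exact: dual_comb.
    move=> z Dz; rewrite /x2 B0A // /xp /csub /cscale /=.
    by rewrite !pB !pD !pZ !mul0r subr0 add0r.
  have [_ [c [c0 hc]]] := hyp x2 dd.
  exists c => _ [x [x0 xn0 ->]].
  have [p2 p1] : (phi (x, 0)).2 = 0 /\ 0 < (phi (x, 0)).1.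
    apply: sphi; first by split.
    by case=> /eqP; rewrite (negbTE xn0).
  have := hc x x0 (x, 0) (cmod_real x0).
  rewrite /x2 /xp /= => h.
  have := sq_bound (mulr_ge0 c0 (ltW p1)) h => h2.
  rewrite pZ normrM gtr0_norm ?invr_gt0 //.
  rewrite -ler_pdivlMl ?invr_gt0 // invrK mulrC; exact: h2.
exists `|K|; split => // x x0.
have [->|xn0] := eqVneq x 0.
  rewrite B00 normr0; apply: mulr_ge0 => //.
  by have [] := phipos (0, 0) (conj erefl (bl_refl L 0)).
have [p2 p1] : (phi (x, 0)).2 = 0 /\ 0 < (phi (x, 0)).1.
  apply: sphi; first by split.
  by case=> /eqP; rewrite (negbTE xn0).
have Ss : S (((phi (x, 0)).1)^-1 *: (B0 (x, 0)).1) by exists x.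
have := le_trans (hK _ Ss) (ler_norm K).
rewrite normrZ gtr0_norm ?invr_gt0 // -ler_pdivlMl ?invr_gt0 // invrK.
by rewrite mulrC.
Qed.

Lemma cscale_r' (a : R) (w : E) : cscale (a, 0) w = (a *: w.1, a *: w.2).
Proof. by case: w => w1 w2; rewrite cscale_r. Qed.

Lemma scale_sym (u w : V) (k r : R) : le (- (k *: u)) w -> le w (k *: u) ->
  le (- ((`|r| * k) *: u)) (r *: w) /\ le (r *: w) ((`|r| * k) *: u).
Proof.
move=> h1 h2; have [r0|r0] := leP 0 r.
  rewrite ger0_norm // -!scalerA -scalerN; split; exact: bl_scale.
have r0' : 0 <= - r by rewrite oppr_ge0 ltW.
have -> : r *: w = (- r) *: (- w) by rewrite scalerN scaleNr opprK.
rewrite ltr0_norm // -!scalerA -scalerN; split.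
  by apply: bl_scale => //; apply: le_opp.
by apply: bl_scale => //; rewrite -[k *: u]opprK; apply: le_opp.
Qed.

Lemma diff_bound (D : set E) (A : E -> E) (mu mu0 : R) (B B0 : E -> E) (u : V)
  (phi : E -> R * R) :
  csubspace D -> clinear_on D A -> real_op D A -> le 0 u ->
  dual_pos L phi -> strictly_pos L phi -> D `<=` ideal_E L u ->
  (forall x', dual_dom D A x' -> ideal_dual L phi x') ->
  is_resolvent D A (mu, 0) B -> is_resolvent D A (mu0, 0) B0 ->
  exists K, 0 <= K /\ forall x, le 0 x ->
    le (- ((K * (phi (x, 0)).1) *: u)) ((B (x, 0)).1 - (B0 (x, 0)).1) /\
    le ((B (x, 0)).1 - (B0 (x, 0)).1) ((K * (phi (x, 0)).1) *: u).
Proof.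
move=> hD hA hR u0 hphi sphi DE hyp hB hB0.
have [K2 [K20 hK2]] := dual_K2 hA hB0 hphi sphi hyp.
have hB' := hB; case: hB' => cB [[BD BZ] [Bf Bx]].
pose b x := (B (x, 0)).1.
have [K1 [K10 hK1]] : exists K : R, 0 <= K /\ forall x,
    le (- ((K * `|x|) *: u)) (b x) /\ le (b x) ((K * `|x|) *: u).
  apply: baire_order => //.
  - move=> x y; rewrite /b.
    have -> : ((x + y, 0) : E) = cadd (x, 0) (y, 0) by rewrite /cadd /= addr0.
    by rewrite BD.
  - move=> a x; rewrite /b.
    have -> : ((a *: x, 0) : E) = cscale (a, 0) (x, 0) by rewrite cscale_r scaler0.
    by rewrite BZ // cscale_r'.
  - exact: cont_re.
  - move=> x; have [c [c0 hc]] := DE _ (proj1 (Bf (x, 0))).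
    exists c; split.
      have := hc pi; rewrite cospi sinpi scale0r addr0 scaleN1r => h.
      by rewrite -[b x]opprK; apply: le_opp.
    by have := hc 0; rewrite cos0 sin0 scale0r addr0 scale1r.
exists (`|mu0 - mu| * (K1 * K2)); split; first by rewrite !mulr_ge0.
move=> x x0.
have r0 : (B0 (x, 0)).2 = 0 := res_real hD hA hR hB0 x.
have id := res_ident hB hB0 (x, 0).
set y := (B0 (x, 0)).1.
have ey : B0 (x, 0) = (y, 0) by move: r0; rewrite /y; case: (B0 (x, 0)) => a c /= ->.
have -> : (B (x, 0)).1 - y = (mu0 - mu) *: b y.
  by rewrite id ey cscale_r' /cadd /= addrC addKr.
have [h1 h2] := hK1 y.
have hy : K1 * `|y| <= K1 * K2 * (phi (x, 0)).1.
  by rewrite -mulrA; apply: ler_wpM2l => //; exact: hK2.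
have h1' : le (- ((K1 * K2 * (phi (x, 0)).1) *: u)) (b y).
  by apply: bl_trans h1; apply: le_opp; apply: le_scale_u.
have h2' : le (b y) ((K1 * K2 * (phi (x, 0)).1) *: u).
  by apply: bl_trans h2 _; apply: le_scale_u.
have := scale_sym (mu0 - mu) h1' h2'.
by rewrite !mulrA.
Qed.

Lemma form_a (T : E -> E) (u : V) (phi : E -> R * R) (c : R) x :
  (T (x, 0)).2 = 0 -> (phi (x, 0)).2 = 0 ->
  csub (T (x, 0)) (cscale (c, 0) (neg_op (tensor u phi) (x, 0))) =
  ((T (x, 0)).1 + (c * (phi (x, 0)).1) *: u, 0).
Proof.
rewrite /neg_op /tensor; case: (T (x, 0)) => t1 t2; case: (phi (x, 0)) => p1 p2 /= -> ->.
rewrite !cscale_r /csub /=; simpc.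
by rewrite scaleN1r scalerN opprK scalerA scaler0 oppr0.
Qed.

Lemma form_b (T : E -> E) (u : V) (phi : E -> R * R) (c : R) x :
  (T (x, 0)).2 = 0 -> (phi (x, 0)).2 = 0 ->
  csub (tensor u phi (x, 0)) (cscale (c, 0) (T (x, 0))) =
  ((phi (x, 0)).1 *: u - c *: (T (x, 0)).1, 0).
Proof.
rewrite /tensor; case: (T (x, 0)) => t1 t2; case: (phi (x, 0)) => p1 p2 /= -> ->.
by rewrite !cscale_r /csub /=; simpc.
Qed.
End Main.

Unset Implicit Arguments.
Set Strict Implicit.

Theorem proposition4p7 (R : realType) (V : completeNormedModType R)
  (L : banach_lattice V) (D : set (cE V)) (A : cE V -> cE V)
  (u : V) (phi : cE V -> R * R) (mu0 : R) :
  csubspace D -> clinear_on D A ->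
  densely_defined D -> closed_op D A -> real_op D A ->
  bl_le L 0 u ->
  dual_pos L phi -> strictly_pos L phi ->
  D `<=` ideal_E L u ->
  (forall x', dual_dom D A x' -> ideal_dual L phi x') ->
  in_resolvent_set D A (mu0, 0) ->
  (forall B0, is_resolvent D A (mu0, 0) B0 ->
     (op_succeq L B0 (neg_op (tensor u phi)) <->
      (forall (mu : R) B, is_resolvent D A (mu, 0) B ->
         op_succeq L B (neg_op (tensor u phi))))) /\
  (forall B0, is_resolvent D A (mu0, 0) B0 ->
     (op_succeq L (tensor u phi) B0 <->
      (forall (mu : R) B, is_resolvent D A (mu, 0) B ->
         op_succeq L (tensor u phi) B))).
Proof.
move=> hD hA _ _ hR u0 hphi sphi DE hyp _.
have phi2 x : bl_le L 0 x -> (phi (x, 0)).2 = 0.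
  by move=> x0; case: (proj2 hphi (x, 0) (conj erefl x0)).
split => B0 hB0; split; last 1 first.
- by move=> H; exact: H mu0 B0 hB0.
- move=> [c0 [c00 hc0]] mu B hB.
  have [K [K0 hK]] := diff_bound hD hA hR u0 hphi sphi DE hyp hB hB0.
  exists (c0 + K); split; first by apply: (lt_le_trans c00); rewrite lerDl.
  case=> x y [/= -> x0].
  have := hc0 (x, 0) (conj erefl x0).
  rewrite !form_a ?(res_real hD hA hR hB) ?(res_real hD hA hR hB0) ?phi2 //.
  case=> _ /= h; split => //=.
  have [hl _] := hK x x0.
  have h2 := bl_add ((K * (phi (x, 0)).1) *: u) hl; rewrite addNr in h2.
  have := le_add2 h h2; rewrite addr0.
  by rewrite mulrDl scalerDl addrACA [(B0 (x, 0)).1 + _]addrC subrK.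
- by move=> H; exact: H mu0 B0 hB0.
- move=> [c0 [c00 hc0]] mu B hB.
  have [K [K0 hK]] := diff_bound hD hA hR u0 hphi sphi DE hyp hB hB0.
  set M := c0^-1 + K.
  have ci : 0 < c0^-1 by rewrite invr_gt0.
  have M0 : 0 < M by apply: (lt_le_trans ci); rewrite lerDl.
  have Mi : 0 < M^-1 by rewrite invr_gt0.
  exists M^-1; split; first by rewrite invr_gt0.
  case=> x y [/= -> x0].
  have := hc0 (x, 0) (conj erefl x0).
  rewrite !form_b ?(res_real hD hA hR hB) ?(res_real hD hA hR hB0) ?phi2 //.
  case=> _ /= h; split => //=.
  have [_ hu] := hK x x0.
  have h1 := le_subl h.
  have h3 := bl_scale (a := c0^-1) (ltW ci) h1.
  rewrite scalerA mulVf ?gt_eqF // scale1r scalerA in h3.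
  have h4 := le_add2 h3 hu.
  rewrite addrC subrK -scalerDl -mulrDl -/M in h4.
  have h5 := bl_scale (a := M^-1) (ltW Mi) h4.
  rewrite scalerA mulrA mulVf ?gt_eqF // mul1r in h5.
  exact: le_subr h5.
Qed.
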